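(* Let $\Lambda$ be a row-finite source-free $k$-graph and let $(X, \mu)$ be a $\sigma$-finite measure space. If a $\Lambda$-projective representation of $C^*(\Lambda)$ on $L^2(X, \mu)$ is monic, then the support of any of its monic vectors $\xi$ differs from $X$ by at most a set of measure $0$.
   Context: A $k$-graph is a countable small category $\Lambda$ with a functor $d:\Lambda\to\mathbb{N}^k$ with unique factorization; row-finite/source-free: the set of paths of each degree with a given range is finite/nonempty. $C^*(\Lambda)$ is the universal $C^*$-algebra of a Cuntz–Krieger $\Lambda$-family. A $\Lambda$-semibranching function system on $(X,\mu)$: measurable $D_\lambda$, prefixing maps $\tau_\lambda:D_\lambda\to X$ with ranges $R_\lambda$, coding maps $\tau^m$ ($m\in\mathbb{N}^k$), such that for each $m$ $\{\tau_\lambda:d(\lambda)=m\}$ is a semibranching function system with coding map $\tau^m$ (finite positive measures, a.e. disjoint ranges covering $X$ a.e., positive Radon–Nikodym derivatives, $\tau^m\circ\tau_\lambda=\mathrm{id}$), $\tau_v=\mathrm{id}$ for vertices, $\tau_\lambda\tau_\nu=\tau_{\lambda\nu}$ a.e., $\tau^m\tau^n=\tau^{m+n}$. A $\Lambda$-projective system adds $f_\lambda\in L^2$ with $0\ne d(\mu\circ\tau_\lambda^{-1})/d\mu=|f_\lambda|^2$ and $f_\lambda(f_\nu\circ\tau^{d(\lambda)})=f_{\lambda\nu}$; the $\Lambda$-projective representation is $T_\lambda f=f_\lambda\cdot(f\circ\tau^{d(\lambda)})$, which satisfies $T_\lambda T_\lambda^*=M_{\chi_{R_\lambda}}$. A representation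 $\{t_\lambda\}$ on $\mathcal H$ is monic if all $t_\lambda\ne0$ and there is $\xi$ (a monic vector) with $\overline{\mathrm{span}}\{t_\lambda t_\lambda^*\xi:\lambda\in\Lambda\}=\mathcal H$. *)

(* Defs.v *)
From HB Require Import structures.
From mathcomp Require Import all_boot all_order all_algebra.
From mathcomp Require Import all_classical all_reals all_analysis.
From mathcomp Require Import complex.

Set Implicit Arguments.
Unset Strict Implicit.
Unset Printing Implicit Defensive.
Import Order.TTheory GRing.Theory Num.Theory.
Local Open Scope classical_set_scope.
Local Open Scope ring_scope.

Definition Nk (k : nat) := {ffun 'I_k -> nat}.
Definition Nk0 (k : nat) : Nk k := [ffun=> 0%N].
Definition Nkadd (k : nat) (m n : Nk k) : Nk k := [ffun i => (m i + n i)%N].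

Record kgraph (k : nat) := KGraph {
  kobj : Type;
  kmor : Type;
  kr : kmor -> kobj;
  ks : kmor -> kobj;
  kid : kobj -> kmor;
  kcomp : kmor -> kmor -> kmor;
  kdeg : kmor -> Nk k;
  kmor_countable : countable [set: kmor];
  kr_id : forall v, kr (kid v) = v;
  ks_id : forall v, ks (kid v) = v;
  kr_comp : forall l m, ks l = kr m -> kr (kcomp l m) = kr l;
  ks_comp : forall l m, ks l = kr m -> ks (kcomp l m) = ks m;
  kcomp_idl : forall l, kcomp (kid (kr l)) l = l;
  kcomp_idr : forall l, kcomp l (kid (ks l)) = l;
  kcompA : forall l m n, ks l = kr m -> ks m = kr n ->
    kcomp l (kcomp m n) = kcomp (kcomp l m) n;
  kdeg_id : forall v, kdeg (kid v) = Nk0 k;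
  kdeg_comp : forall l m, ks l = kr m ->
    kdeg (kcomp l m) = Nkadd (kdeg l) (kdeg m);
  kfactorization : forall l (m n : Nk k), kdeg l = Nkadd m n ->
    exists! p : kmor * kmor,
      [/\ ks p.1 = kr p.2, kdeg p.1 = m, kdeg p.2 = n & kcomp p.1 p.2 = l]
}.

Definition paths_from (k : nat) (L : kgraph k) (v : kobj L) (m : Nk k) :=
  [set l : kmor L | kr l = v /\ kdeg l = m].

Definition row_finite (k : nat) (L : kgraph k) :=
  forall (v : kobj L) m, finite_set (paths_from v m).

Definition source_free (k : nat) (L : kgraph k) :=
  forall (v : kobj L) m, paths_from v m !=set0.

Section L2.
Context {R : realType} {d : measure_display} {X : measurableType d}.
Variable mu : {measure set X -> \bar R}.

Definition cabs2 (z : R[i]) : R := complex.Re z ^+ 2 + complex.Im z ^+ 2.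

Definition cmeasurable (f : X -> R[i]) :=
  measurable_fun setT (fun x => complex.Re (f x)) /\
  measurable_fun setT (fun x => complex.Im (f x)).

Definition L2 (f : X -> R[i]) :=
  cmeasurable f /\ (\int[mu]_x (cabs2 (f x))%:E < +oo)%E.

(* <f, g> = \int f * conj g  dmu *)
Definition inner (f g : X -> R[i]) : R[i] :=
  Complex
    (Rintegral mu setT (fun x => complex.Re (f x) * complex.Re (g x)
                               + complex.Im (f x) * complex.Im (g x)))
    (Rintegral mu setT (fun x => complex.Im (f x) * complex.Re (g x)
                               - complex.Re (f x) * complex.Im (g x))).

Definition ae_zero (f : X -> R[i]) := {ae mu, forall x, f x = 0}.

Definition is_adjoint (T S : (X -> R[i]) -> (X -> R[i])) :=
  forall f g, L2 f -> L2 g -> L2 (S g) /\ inner (T f) g = inner f (S g).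

Definition dense_span (A : set (X -> R[i])) :=
  forall g, L2 g -> forall eps : R, 0 < eps ->
    exists (n : nat) (c : 'I_n -> R[i]) (h : 'I_n -> X -> R[i]),
      (forall i, A (h i)) /\
      (\int[mu]_x (cabs2 (g x - \sum_(i < n) c i * h i x))%:E < eps%:E)%E.

End L2.

Section SBFS.
Context {R : realType} {d : measure_display} {X : measurableType d}.
Variable mu : {measure set X -> \bar R}.
Variables (k : nat) (L : kgraph k).
Variables (D : kmor L -> set X) (tau : kmor L -> X -> X) (coding : Nk k -> X -> X).

Definition Rng (l : kmor L) : set X := tau l @` D l.

Definition sbfs_deg (m : Nk k) :=
  [/\ (forall l, kdeg l = m ->
        [/\ measurable (D l),
            ((0 < mu (D l))%E /\ (mu (D l) < +oo)%E),
            measurable (Rng l),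
            ((0 < mu (Rng l))%E /\ (mu (Rng l) < +oo)%E) &
            measurable_fun (D l) (tau l)]) /\
      measurable_fun setT (coding m),
      mu (~` \bigcup_(l in [set l | kdeg l = m]) Rng l) = 0%E,
      (forall l1 l2, kdeg l1 = m -> kdeg l2 = m -> l1 <> l2 ->
        mu (Rng l1 `&` Rng l2) = 0%E),
      (* Radon-Nikodym derivative of mu o tau_l w.r.t. mu is > 0 a.e. on D l *)
      (forall l, kdeg l = m -> exists Phi : X -> R,
        [/\ measurable_fun (D l) Phi,
            {ae mu, forall x, D l x -> 0 < Phi x} &
            forall A, measurable A -> A `<=` D l ->
              measurable (tau l @` A) /\
              mu (tau l @` A) = (\int[mu]_(x in A) (Phi x)%:E)%E]) &
      (forall l, kdeg l = m -> forall x, D l x -> coding m (tau l x) = x)].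

Definition Lambda_sbfs :=
  [/\ (forall m, sbfs_deg m),
      (forall v x, D (kid v) x -> tau (kid v) x = x),
      (forall l n, ks l = kr n ->
         mu (Rng n `\` D l) = 0%E /\
         {ae mu, forall x, D n x -> tau l (tau n x) = tau (kcomp l n) x}) &
      (forall m n x, coding m (coding n x) = coding (Nkadd m n) x)].

Definition Lambda_projective (f : kmor L -> X -> R[i]) :=
  [/\ Lambda_sbfs,
      (forall l, L2 mu (f l)),
      (forall l, ~ ae_zero mu (f l)),
      (* d(mu o tau_l^{-1})/dmu = |f_l|^2 *)
      (forall l A, measurable A ->
         mu (D l `&` tau l @^-1` A) = (\int[mu]_(x in A) (cabs2 (f l x))%:E)%E) &
      (forall l n, ks l = kr n ->
         {ae mu, forall x, f l x * f n (coding (kdeg l) x) = f (kcomp l n) x})].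

Definition proj_rep (f : kmor L -> X -> R[i]) (l : kmor L) (g : X -> R[i]) :
  X -> R[i] := fun x => f l x * g (coding (kdeg l) x).

End SBFS.

Section Monic.
Context {R : realType} {d : measure_display} {X : measurableType d}.
Variable mu : {measure set X -> \bar R}.
Variable I : Type.
Variable t : I -> (X -> R[i]) -> (X -> R[i]).

Definition monic_vector (xi : X -> R[i]) :=
  L2 mu xi /\
  exists ts : I -> (X -> R[i]) -> (X -> R[i]),
    (forall l, is_adjoint mu (t l) (ts l)) /\
    dense_span mu [set h | exists l, h = t l (ts l xi)].

Definition monic_rep :=
  (forall l, exists g, L2 mu g /\ ~ ae_zero mu (t l g)) /\
  exists xi, monic_vector xi.

End Monic.

(* Main.v *)
Require Import Defs.
From HB Require Import structures.
From mathcomp Require Import all_boot all_order all_algebra.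
From mathcomp Require Import all_classical all_reals all_analysis.
From mathcomp Require Import complex.
From mathcomp Require Import measurable_realfun.
Local Open Scope classical_set_scope.
Local Open Scope ring_scope.
Import Order.TTheory GRing.Theory Num.Theory.

Set Implicit Arguments.
Unset Strict Implicit.
Unset Printing Implicit Defensive.


Lemma cReD (R : realType) (x y : R[i]) : complex.Re (x + y) = complex.Re x + complex.Re y.
Proof. by case: x => a b; case: y. Qed.
Lemma cImD (R : realType) (x y : R[i]) : complex.Im (x + y) = complex.Im x + complex.Im y.
Proof. by case: x => a b; case: y. Qed.
Lemma cReB (R : realType) (x y : R[i]) : complex.Re (x - y) = complex.Re x - complex.Re y.
Proof. by case: x => a b; case: y. Qed.
Lemma cImB (R : realType) (x y : R[i]) : complex.Im (x - y) = complex.Im x - complex.Im y.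
Proof. by case: x => a b; case: y. Qed.
Lemma cReM (R : realType) (x y : R[i]) :
  complex.Re (x * y) = complex.Re x * complex.Re y - complex.Im x * complex.Im y.
Proof. by case: x => a b; case: y. Qed.
Lemma cImM (R : realType) (x y : R[i]) :
  complex.Im (x * y) = complex.Re x * complex.Im y + complex.Im x * complex.Re y.
Proof. by case: x => a b; case: y. Qed.
Lemma cRe0 (R : realType) : complex.Re (0 : R[i]) = 0. Proof. by []. Qed.
Lemma cIm0 (R : realType) : complex.Im (0 : R[i]) = 0. Proof. by []. Qed.

Lemma cabs2_ge0 (R : realType) (z : R[i]) : 0 <= cabs2 z.
Proof. by rewrite /cabs2 addr_ge0 // sqr_ge0. Qed.

Lemma cabs2_eq0 (R : realType) (z : R[i]) : cabs2 z = 0 -> z = 0.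
Proof.
case: z => a b; rewrite /cabs2 /= => /eqP; rewrite paddr_eq0 ?sqr_ge0 //.
by rewrite !sqrf_eq0 => /andP[/eqP -> /eqP ->].
Qed.

Lemma cabs2_0 (R : realType) : cabs2 (0 : R[i]) = 0.
Proof. by rewrite /cabs2 /= expr0n /= addr0. Qed.

Lemma cabs2_1 (R : realType) : cabs2 (1 : R[i]) = 1.
Proof. by rewrite /cabs2 /= expr1n expr0n /= addr0. Qed.

Lemma cmeas_add (R : realType) d (X : measurableType d) (f g : X -> R[i]) :
  cmeasurable f -> cmeasurable g -> cmeasurable (fun x => f x + g x).
Proof.
move=> [mf1 mf2] [mg1 mg2]; split.
  by under eq_fun do rewrite cReD; exact: measurable_funD.
by under eq_fun do rewrite cImD; exact: measurable_funD.
Qed.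

Lemma cmeas_sub (R : realType) d (X : measurableType d) (f g : X -> R[i]) :
  cmeasurable f -> cmeasurable g -> cmeasurable (fun x => f x - g x).
Proof.
move=> [mf1 mf2] [mg1 mg2]; split.
  by under eq_fun do rewrite cReB; exact: measurable_funB.
by under eq_fun do rewrite cImB; exact: measurable_funB.
Qed.

Lemma cmeas_mul (R : realType) d (X : measurableType d) (f g : X -> R[i]) :
  cmeasurable f -> cmeasurable g -> cmeasurable (fun x => f x * g x).
Proof.
move=> [mf1 mf2] [mg1 mg2]; split.
  under eq_fun do rewrite cReM.
  by apply: measurable_funB; apply: measurable_funM.
under eq_fun do rewrite cImM.
by apply: measurable_funD; apply: measurable_funM.
Qed.

Lemma cmeas_cst (R : realType) d (X : measurableType d) (c : R[i]) :
  cmeasurable (fun _ : X => c).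
Proof. by split; exact: measurable_cst. Qed.

Lemma cmeas_comp (R : realType) d (X : measurableType d) (f : X -> R[i]) (h : X -> X) :
  cmeasurable f -> measurable_fun setT h -> cmeasurable (fun x => f (h x)).
Proof.
move=> [mf1 mf2] mh; split.
  exact: (measurableT_comp mf1 mh).
exact: (measurableT_comp mf2 mh).
Qed.

Lemma cmeas_sum (R : realType) d (X : measurableType d) n (F : 'I_n -> X -> R[i]) :
  (forall i, cmeasurable (F i)) -> cmeasurable (fun x => \sum_(i < n) F i x).
Proof.
elim: n F => [|n IH] F HF.
  under eq_fun do rewrite big_ord0; exact: cmeas_cst.
under eq_fun do rewrite big_ord_recr /=.
apply: cmeas_add => //; exact: (IH (fun i => F (widen_ord (leqnSn n) i))).
Qed.

Lemma cmeas_restr (R : realType) d (X : measurableType d) (f : X -> R[i]) (A : set X) :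
  measurable A -> cmeasurable f -> cmeasurable (fun x => if x \in A then f x else 0).
Proof.
move=> mA [mf1 mf2]; split.
  rewrite (_ : (fun x => _) = (fun x => \1_A x * complex.Re (f x))).
    by apply: measurable_funM => //; exact: measurable_indic.
  by apply/funext => x; rewrite /indic; case: (x \in A); rewrite ?mul1r ?mul0r.
rewrite (_ : (fun x => _) = (fun x => \1_A x * complex.Im (f x))).
  by apply: measurable_funM => //; exact: measurable_indic.
by apply/funext => x; rewrite /indic; case: (x \in A); rewrite ?mul1r ?mul0r.
Qed.

Lemma cmeas_cabs2 (R : realType) d (X : measurableType d) (f : X -> R[i]) :
  cmeasurable f -> measurable_fun setT (fun x => cabs2 (f x)).
Proof.
move=> [mf1 mf2]; rewrite /cabs2.
by apply: measurable_funD; apply: measurable_funX.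
Qed.

Lemma cmeas_cabs2E (R : realType) d (X : measurableType d) (f : X -> R[i]) (D : set X) :
  cmeasurable f -> measurable_fun D (fun x => (cabs2 (f x))%:E).
Proof.
move=> mf; apply: measurable_funTS; apply/measurable_EFinP; exact: cmeas_cabs2.
Qed.

Lemma cmeas_zero (R : realType) d (X : measurableType d) (f : X -> R[i]) :
  cmeasurable f -> measurable [set x | f x = 0].
Proof.
move=> [mf1 mf2].
rewrite (_ : [set x | f x = 0] = (fun x => complex.Re (f x)) @^-1` [set 0] `&`
   (fun x => complex.Im (f x)) @^-1` [set 0]).
  apply: measurableI.
    by rewrite -[X in measurable X]setTI; apply: mf1 => //; exact: measurable_set1.
  by rewrite -[X in measurable X]setTI; apply: mf2 => //; exact: measurable_set1.
apply/seteqP; split => x /=.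
  by move=> ->.
by case: (f x) => a b /= [-> ->].
Qed.


Lemma int_cabs2_ae0 (R : realType) d (X : measurableType d)
  (mu : {measure set X -> \bar R}) (V : set X) (h : X -> R[i]) :
  measurable V -> cmeasurable h ->
  (\int[mu]_(x in V) (cabs2 (h x))%:E = 0)%E -> {ae mu, forall x, V x -> h x = 0}.
Proof.
move=> mV mh H0.
have := (ae_eq_integral_abs mu mV (cmeas_cabs2E (D:=V) mh)).1.
rewrite (eq_integral (fun x => (cabs2 (h x))%:E)); last first.
  by move=> x _; rewrite gee0_abs // lee_fin cabs2_ge0.
move=> /(_ H0); apply: filterS => x H Vx; apply: cabs2_eq0.
by have := H Vx => -[].
Qed.

Lemma fzero (R : realType) d (X : measurableType d)
  (mu : {measure set X -> \bar R}) (Dl : set X) (tl : X -> X) (fl : X -> R[i]) (V : set X) :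
  cmeasurable fl -> measurable V ->
  mu (Dl `&` tl @^-1` V) = (\int[mu]_(x in V) (cabs2 (fl x))%:E)%E ->
  mu (Dl `&` tl @^-1` V) = 0%E -> {ae mu, forall x, V x -> fl x = 0}.
Proof.
by move=> mf mV -> H0; apply: int_cabs2_ae0.
Qed.

Lemma Rint_ae0 (R : realType) d (X : measurableType d)
  (mu : {measure set X -> \bar R}) (F : X -> R) :
  measurable_fun setT F -> {ae mu, forall x, F x = 0} -> Rintegral mu setT F = 0.
Proof.
move=> mF H; rewrite /Rintegral (ae_eq_integral (cst 0%E)) //.
- by rewrite integral0.
- exact/measurable_EFinP.
- by apply: filterS H => x /= -> _.
Qed.

Lemma Rint_ge0_ae0 (R : realType) d (X : measurableType d)
  (mu : {measure set X -> \bar R}) (F : X -> R) :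
  measurable_fun setT F -> (forall x, 0 <= F x) ->
  (\int[mu]_x (F x)%:E < +oo)%E ->
  Rintegral mu setT F = 0 -> {ae mu, forall x, F x = 0}.
Proof.
move=> mF F0 Hlt H.
have Hge : (0 <= \int[mu]_x (F x)%:E)%E by apply: integral_ge0 => x _; rewrite lee_fin.
have Hfin : ((\int[mu]_x (F x)%:E) \is a fin_num)%E by rewrite ge0_fin_numE.
have H0 : (\int[mu]_x (F x)%:E = 0)%E.
  by rewrite -(fineK Hfin); move: H; rewrite /Rintegral => ->.
have mFE : measurable_fun setT (fun x => (F x)%:E) by exact/measurable_EFinP.
have := (ae_eq_integral_abs mu measurableT mFE).1.
have -> : (\int[mu]_x `|(F x)%:E| = \int[mu]_x (F x)%:E)%E.
  by apply: eq_integral => x _; rewrite gee0_abs // lee_fin.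
move=> /(_ H0).
by apply: filterS => x Hx; have := Hx I => -[].
Qed.


Lemma inner_Re_meas (R : realType) d (X : measurableType d) (f g : X -> R[i]) :
  cmeasurable f -> cmeasurable g ->
  measurable_fun setT (fun x => complex.Re (f x) * complex.Re (g x)
                               + complex.Im (f x) * complex.Im (g x)).
Proof.
move=> [f1 f2] [g1 g2].
by apply: measurable_funD; apply: measurable_funM.
Qed.

Lemma keyA (R : realType) d (X : measurableType d)
  (mu : {measure set X -> \bar R}) (Dl : set X) (tl cod : X -> X)
  (fl xi s : X -> R[i]) :
  measurable Dl -> measurable_fun Dl tl -> measurable_fun setT cod ->
  (forall x, Dl x -> cod (tl x) = x) ->
  cmeasurable fl ->
  (forall A, measurable A ->
     mu (Dl `&` tl @^-1` A) = (\int[mu]_(x in A) (cabs2 (fl x))%:E)%E) ->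
  L2 mu xi -> L2 mu s ->
  (forall g, L2 mu g -> inner mu (fun x => fl x * g (cod x)) xi = inner mu g s) ->
  {ae mu, forall x, xi x = 0 -> fl x * s (cod x) = 0}.
Proof.
move=> mD mt mc Hct mf Hdens [mxi ixi] [ms iS] Hadj.
set Z := [set x | xi x = 0].
have mZ : measurable Z by exact: cmeas_zero.
set B := Dl `&` tl @^-1` Z.
have mB : measurable B by exact: mt.
have mpre : forall A, measurable A -> measurable (cod @^-1` A).
  by move=> A mA; rewrite -[X in measurable X]setTI; exact: mc.
set g := fun x => if x \in B then s x else 0.
have mg : cmeasurable g by exact: cmeas_restr.
have Lg : L2 mu g.
  split => //; apply: le_lt_trans iS.
  apply: ge0_le_integral => //.
  - by move=> x _; rewrite lee_fin cabs2_ge0.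
  - exact: cmeas_cabs2E.
  - exact: cmeas_cabs2E.
  - move=> x _; rewrite lee_fin /g; case: (x \in B) => //.
    by rewrite cabs2_0 cabs2_ge0.
set V := ~` Z `&` cod @^-1` B.
have mV : measurable V by apply: measurableI; [exact: measurableC|exact: mpre].
have HV : {ae mu, forall x, V x -> fl x = 0}.
  apply: (fzero mf mV (Hdens _ mV)).
  rewrite (_ : _ `&` _ = set0) ?measure0 //.
  apply/seteqP; split => // y [Dy [nZ [_ Zy]]].
  by move: Zy; rewrite /= Hct.
have Hre := f_equal (@complex.Re R) (Hadj g Lg).
rewrite /inner /= in Hre.
have H1 : Rintegral mu setT (fun x => complex.Re (fl x * g (cod x)) * complex.Re (xi x)
   + complex.Im (fl x * g (cod x)) * complex.Im (xi x)) = 0.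
  apply: Rint_ae0.
    apply: inner_Re_meas => //; apply: cmeas_mul => //; exact: cmeas_comp.
  apply: filterS HV => x HVx.
  have [Zx|nZx] := pselect (Z x).
    by rewrite Zx /= !mulr0 addr0.
  have [Bx|nBx] := pselect (B (cod x)).
    by rewrite HVx // mul0r /= !mul0r addr0.
  rewrite /g memNset // mulr0 /= !mul0r addr0.
  done.
rewrite H1 in Hre.
have H2 : {ae mu, forall x, (if x \in B then cabs2 (s x) else 0) = 0}.
  apply: Rint_ge0_ae0.
  - apply: measurable_funTS.
    rewrite (_ : (fun x => _) = (fun x => \1_B x * cabs2 (s x))).
      by apply: measurable_funM; [exact: measurable_indic|exact: cmeas_cabs2].
    by apply/funext => x; rewrite /indic; case: (x \in B); rewrite ?mul1r ?mul0r.
  - by move=> x; case: (x \in B); rewrite ?cabs2_ge0.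
  - apply: le_lt_trans iS.
    apply: ge0_le_integral => //.
    + by move=> x _; rewrite lee_fin; case: (x \in B); rewrite ?cabs2_ge0.
    + apply/measurable_EFinP.
      rewrite (_ : (fun x => _) = (fun x => \1_B x * cabs2 (s x))).
        by apply: measurable_funM; [exact: measurable_indic|exact: cmeas_cabs2].
      by apply/funext => x; rewrite /indic; case: (x \in B); rewrite ?mul1r ?mul0r.
    + exact: cmeas_cabs2E.
    + move=> x _; rewrite lee_fin; case: (x \in B) => //.
      by rewrite cabs2_ge0.
  - apply: (eq_trans _ (esym Hre)); apply: eq_Rintegral => x _.
    rewrite /g; case: (x \in B); last by rewrite /= !mul0r addr0.
    by rewrite /cabs2 !expr2.
set W := Z `&` cod @^-1` (~` [set x | s x = 0]).
have mW : measurable W.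
  apply: measurableI => //; apply: mpre; apply: measurableC; exact: cmeas_zero.
have HW : {ae mu, forall x, W x -> fl x = 0}.
  apply: (fzero mf mW (Hdens _ mW)).
  have mDW : measurable (Dl `&` tl @^-1` W) by exact: mt.
  case: H2 => N [mN N0 HN].
  apply/eqP; rewrite -measure_le0 -N0; apply: le_measure; rewrite ?inE //.
  move=> y [Dy [Zy nsy]]; apply: HN => /=.
  rewrite /= Hct // in nsy.
  have By : y \in B by apply/mem_set.
  by rewrite By => /cabs2_eq0.
apply: filterS HW => x HWx Zx.
have [s0|ns0] := pselect (s (cod x) = 0).
  by rewrite s0 mulr0.
by rewrite HWx ?mul0r.
Qed.

Unset Implicit Arguments.
Set Strict Implicit.
Set Printing Implicit Defensive.


Theorem proposition3p5 (k : nat) (L : kgraph k)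
  (R : realType) (d : measure_display) (X : measurableType d)
  (mu : {measure set X -> \bar R})
  (D : kmor L -> set X) (tau : kmor L -> X -> X) (coding : Nk k -> X -> X)
  (f : kmor L -> X -> R[i]) (xi : X -> R[i]) :
  row_finite L -> source_free L ->
  sigma_finite setT mu ->
  Lambda_projective mu D tau coding f ->
  monic_rep mu (proj_rep coding f) ->
  monic_vector mu (proj_rep coding f) xi ->
  mu [set x | xi x = 0] = 0%E.
Proof.
move=> _ _ [F HF HFm] [[Hdeg _ _ _] HL2f _ Hdens _] _ [HL2xi [ts [Hadj Hdense]]].
set Z := [set x | xi x = 0].
have mZ : measurable Z by apply: cmeas_zero; case: HL2xi.
have mcod : forall m, measurable_fun setT (coding m).
  by move=> m; case: (Hdeg m) => [[_ ?] _ _ _ _].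
have HLs : forall l, L2 mu (ts l xi) by move=> l; exact: (Hadj l xi xi HL2xi HL2xi).1.
have Hkey : forall l, {ae mu, forall x, Z x -> proj_rep coding f l (ts l xi) x = 0}.
  move=> l; case: (Hdeg (kdeg l)) => [[Hl mc] _ _ _ Hct].
  case: (Hl l erefl) => mDl _ _ _ mtl.
  apply: (keyA mDl mtl mc (Hct l erefl) (proj1 (HL2f l)) (Hdens l) HL2xi (HLs l)).
  by move=> g Lg; exact: (Hadj l g xi Lg HL2xi).2.
have cmT : forall l, cmeasurable (proj_rep coding f l (ts l xi)).
  move=> l; apply: cmeas_mul; first exact: (proj1 (HL2f l)).
  by apply: cmeas_comp => //; case: (HLs l).
apply: contrapT => HZ.
have [i Hi] : exists i, mu (Z `&` F i) <> 0%E.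
  apply: contrapT => Hall.
  apply: HZ; apply: measure_negligible => //.
  have -> : Z = \bigcup_i (Z `&` F i).
    by rewrite -setI_bigcupr -HF setIT.
  apply: negligible_bigcup => j.
  have mj : measurable (Z `&` F j) by apply: measurableI => //; case: (HFm j).
  apply/negligibleP => //.
  by apply: contrapT => Hj; apply: Hall; exists j.
set Z' := Z `&` F i.
have mZ' : measurable Z' by apply: measurableI => //; case: (HFm i).
have Zfin : (mu Z' < +oo)%E.
  apply: le_lt_trans (proj2 (HFm i)); apply: le_measure; rewrite ?inE //.
    by case: (HFm i).
  exact: subIsetr.
have Zpos : (0 < mu Z')%E by rewrite lt0e measure_ge0 andbT; apply/eqP.
set g1 := fun x => if x \in Z' then (1 : R[i]) else 0.
have cg1 : cmeasurable g1 by apply: cmeas_restr => //; exact: cmeas_cst.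
have Hg1 : forall x, cabs2 (g1 x) = \1_Z' x.
  by move=> x; rewrite /g1 /indic; case: (x \in Z'); rewrite ?cabs2_1 ?cabs2_0.
have Lg1 : L2 mu g1.
  split => //; rewrite (eq_integral (fun x => (\1_Z' x)%:E)); last first.
    by move=> x _; rewrite Hg1.
  by rewrite integral_indic // setIT.
have eps0 : 0 < fine (mu Z') by apply: fine_gt0; rewrite Zpos Zfin.
have [n [c [h [Hh Hlt]]]] := Hdense g1 Lg1 _ eps0.
pose li j := projT1 (cid (Hh j)).
have Hli : forall j, h j = proj_rep coding f (li j) (ts (li j) xi).
  by move=> j; exact: (projT2 (cid (Hh j))).
have ch : forall j, cmeasurable (h j) by move=> j; rewrite Hli.
have Hall : {ae mu, forall x, forall j, Z x -> h j x = 0}.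
  apply: filter_forall => j; rewrite Hli; exact: Hkey.
set G := fun x => cabs2 (g1 x - \sum_(j < n) c j * h j x).
have mG : measurable_fun setT (fun x => (G x)%:E).
  apply: cmeas_cabs2E; apply: cmeas_sub => //.
  apply: cmeas_sum => j; apply: cmeas_mul => //; exact: cmeas_cst.
have H1 : (\int[mu]_(x in Z') (G x)%:E <= \int[mu]_x (G x)%:E)%E.
  apply: ge0_subset_integral => //.
  by move=> x _; rewrite lee_fin cabs2_ge0.
have H2 : (\int[mu]_(x in Z') (G x)%:E = \int[mu]_(x in Z') (cst 1%E) x)%E.
  apply: ae_eq_integral => //; try exact: measurable_funTS; try exact: measurable_cst.
  apply: filterS Hall => x Hx Z'x.
  have Zx : Z x by case: Z'x.
  rewrite /G big1; last by move=> j _; rewrite Hx // mulr0.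
  by rewrite subr0 /g1 mem_set // cabs2_1.
rewrite H2 integral_cst // mul1e in H1.
have := le_lt_trans H1 Hlt.
by rewrite fineK ?ge0_fin_numE ?Zfin // ltxx.
Qed.
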